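(* Let $D\subset\mathbb{R}^2$ be open, let $I\subset\mathbb{R}$ be an open interval, and let $\chi: D\times I\to\mathbb{R}^2$ be a $C^1$ map with $|\chi(x,t)|=1$ for all $(x,t)$. Let $R=\begin{bmatrix}0&-1\\1&0\end{bmatrix}$, write $\chi^{\perp}=R\chi$, let $\nabla\cdot\chi$ denote the divergence of $\chi(\cdot,t)$ with respect to $x$, and let $\partial_t\chi$ denote the partial derivative in $t$ at fixed $x$. Let $x:\mathbb{R}\times I\to D$, $(s,t)\mapsto x(s,t)$, be a $C^1$ map whose partial derivatives $\partial_s x$ and $\partial_t x$ are themselves $C^1$, and which satisfies $$\partial_s x(s,t)=\chi(x(s,t),t)\qquad\text{for all }(s,t).$$ Assume there is a $C^1$ function $\sigma:I\to(0,\infty)$ such that $x(s+\sigma(t),t)=x(s,t)$ for all $s,t$; thus for each $t$ the curve $s\mapsto x(s,t)$ is a closed, arclength-parametrized orbit of period $\sigma(t)$ of the direction field $\chi(\cdot,t)$. Assume further that $$\rho_2(t):=\exp\Big(\int_0^{\sigma(t)}\nabla\cdot\chi(x(\vartheta,t),t)\,d\vartheta\Big)\neq 1\qquad\text{for all } t\in I.$$ Define $$\psi(s,t):=\big\langle \chi^{\perp}(x(s,t),t),\,\partial_t\chi(x(s,t),t)\big\rangle,$$ $$\Pi^{\perp}(s,t):=\int_0^s \exp\Big(\int_\vartheta^s \nabla\cdot\chi(x(\tau,t),t)\,d\tau\Big)\,\psi(\vartheta,t)\,d\vartheta,$$ and let $$N(s,t):=\big\langle \partial_t x(s,t),\,\chi^{\perp}(x(s,t),t)\big\rangle$$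 be the normal velocity of the curve family. Then for all $s\in\mathbb{R}$ and $t\in I$, $$N(s,t)=\exp\Big(\int_0^s\nabla\cdot\chi(x(\vartheta,t),t)\,d\vartheta\Big)\,N(0,t)+\Pi^{\perp}(s,t),$$ and $$N(0,t)=\frac{\Pi^{\perp}(\sigma(t),t)}{1-\rho_2(t)}.$$ Moreover, suppose in addition that $\mu\in\mathbb{R}$ is a constant and $S: D\times I\to\mathbb{R}^{2\times 2}$ is a $C^1$ map with symmetric values such that $\langle\chi,(S-\mu I)\chi\rangle=0$ on $D\times I$. Then at every point $(x(s,t),t)$ where $\langle\chi,S\chi^{\perp}\rangle\neq0$, $$\psi(s,t)=-\frac{\langle\chi,\partial_tS\,\chi\rangle}{2\langle\chi,S\chi^{\perp}\rangle},$$ where $\chi$, $\chi^{\perp}$, $S$ and $\partial_t S$ are all evaluated at $(x(s,t),t)$.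
   Context: In the paper, the direction field is $\chi=\chi_\mu^{\pm}$, built from the eigenvalues $s_1\le s_2$ and unit eigenvectors $e_1$, $e_2=Re_1$ of the rate-of-strain tensor $S=\tfrac12(\nabla v+\nabla v^\top)$ of a planar unsteady velocity field $v(x,t)$: $$\chi_\mu^{\pm}=\sqrt{\tfrac{s_2-\mu}{s_2-s_1}}\,e_1\pm\sqrt{\tfrac{\mu-s_1}{s_2-s_1}}\,e_2 .$$ This field satisfies $\langle\chi,(S-\mu I)\chi\rangle=0$. Closed orbits (limit cycles) of such a field are called elliptic objective Eulerian coherent structures (OECSs). The pointwise material flux density through the moving curve is $$\varphi(x(s,t),t)=\langle v(x(s,t),t),\chi^\perp(x(s,t),t)\rangle-N(s,t).$$ The condition $\rho_2\neq1$ expresses hyperbolicity of the limit cycle: $\rho_2$ is its nontrivial Floquet multiplier. *)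

(* Defs.v *)
From Stdlib Require Import Reals.
From Coquelicot Require Import Coquelicot.
Open Scope R_scope.

Definition pd1 (f : R -> R -> R -> R) : R -> R -> R -> R :=
  fun x1 x2 t => Derive (fun z => f z x2 t) x1.
Definition pd2 (f : R -> R -> R -> R) : R -> R -> R -> R :=
  fun x1 x2 t => Derive (fun z => f x1 z t) x2.
Definition pd3 (f : R -> R -> R -> R) : R -> R -> R -> R :=
  fun x1 x2 t => Derive (fun z => f x1 x2 z) t.

Definition cont3 (f : R -> R -> R -> R) (x1 x2 t : R) : Prop :=
  continuous (fun p : (R * R) * R => f (fst (fst p)) (snd (fst p)) (snd p))
    ((x1, x2), t).

Definition C1_3 (U : R -> R -> R -> Prop) (f : R -> R -> R -> R) : Prop :=
  forall x1 x2 t, U x1 x2 t ->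
    ex_derive (fun z => f z x2 t) x1 /\
    ex_derive (fun z => f x1 z t) x2 /\
    ex_derive (fun z => f x1 x2 z) t /\
    cont3 f x1 x2 t /\ cont3 (pd1 f) x1 x2 t /\
    cont3 (pd2 f) x1 x2 t /\ cont3 (pd3 f) x1 x2 t.

Definition ps (f : R -> R -> R) : R -> R -> R :=
  fun s t => Derive (fun z => f z t) s.
Definition pt (f : R -> R -> R) : R -> R -> R :=
  fun s t => Derive (fun z => f s z) t.

Definition cont2 (f : R -> R -> R) (s t : R) : Prop :=
  continuous (fun p : R * R => f (fst p) (snd p)) (s, t).

Definition C1_2 (U : R -> R -> Prop) (f : R -> R -> R) : Prop :=
  forall s t, U s t ->
    ex_derive (fun z => f z t) s /\ ex_derive (fun z => f s z) t /\
    cont2 f s t /\ cont2 (ps f) s t /\ cont2 (pt f) s t.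

Definition dot2 (a1 a2 b1 b2 : R) : R := a1 * b1 + a2 * b2.

Definition divg (c1 c2 : R -> R -> R -> R) (x1 x2 t : R) : R :=
  pd1 c1 x1 x2 t + pd2 c2 x1 x2 t.

Definition inI (a b : Rbar) (t : R) : Prop := Rbar_lt a t /\ Rbar_lt t b.

(* Main.v *)
Require Import Defs.
From Stdlib Require Import Reals Lra.
From Coquelicot Require Import Coquelicot.
Open Scope R_scope.


Lemma ball_R (x e y : R) : ball x e y <-> Rabs (y - x) < e.
Proof. unfold ball; simpl; unfold AbsRing_ball, abs, minus, plus, opp; simpl. tauto. Qed.

Definition ec3 (g : R -> R -> R -> R) (p1 p2 p3 : R) : Prop :=
  forall eps, 0 < eps -> exists d, 0 < d /\ forall q1 q2 q3,
    Rabs (q1 - p1) < d -> Rabs (q2 - p2) < d -> Rabs (q3 - p3) < d ->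
    Rabs (g q1 q2 q3 - g p1 p2 p3) < eps.

Lemma cont3_ec g p1 p2 p3 : cont3 g p1 p2 p3 -> ec3 g p1 p2 p3.
Proof.
  intros H eps Heps.
  assert (Hl : locally (g p1 p2 p3) (ball (g p1 p2 p3) eps)).
  { exact (locally_ball (g p1 p2 p3) (mkposreal eps Heps)). }
  specialize (H _ Hl). destruct H as [d Hd].
  exists d; split; [apply cond_pos|]. intros q1 q2 q3 h1 h2 h3.
  specialize (Hd ((q1, q2), q3)). simpl in Hd.
  apply ball_R. apply Hd. split; [split|]; apply ball_R; assumption.
Qed.

Lemma cont2_ec g s t : cont2 g s t -> forall eps, 0 < eps -> exists d, 0 < d /\
   forall q1 q2, Rabs (q1 - s) < d -> Rabs (q2 - t) < d -> Rabs (g q1 q2 - g s t) < eps.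
Proof.
  intros H eps Heps.
  assert (Hl : locally (g s t) (ball (g s t) eps)).
  { exact (locally_ball (g s t) (mkposreal eps Heps)). }
  specialize (H _ Hl). destruct H as [d Hd].
  exists d; split; [apply cond_pos|]. intros q1 q2 h1 h2.
  specialize (Hd (q1, q2)). simpl in Hd.
  apply ball_R. apply Hd. split; apply ball_R; assumption.
Qed.

Lemma inI_loc a b t : inI a b t -> exists d, 0 < d /\ forall v, Rabs (v - t) < d -> inI a b v.
Proof.
  intros H.
  assert (Ho : @open R_UniformSpace (fun u : R => Rbar_lt a u /\ Rbar_lt u b)).
  { apply open_and; [apply open_Rbar_gt | apply open_Rbar_lt]. }
  destruct (Ho t H) as [d Hd]. exists d; split; [apply cond_pos|].
  intros v hv. apply Hd. apply ball_R. exact hv.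
Qed.

Lemma D_loc (D : R -> R -> Prop) y1 y2 : open (fun p : R * R => D (fst p) (snd p)) -> D y1 y2 ->
  exists d, 0 < d /\ forall q1 q2, Rabs (q1 - y1) < d -> Rabs (q2 - y2) < d -> D q1 q2.
Proof.
  intros Ho H. destruct (Ho (y1, y2) H) as [d Hd]. exists d; split; [apply cond_pos|].
  intros q1 q2 h1 h2. apply (Hd (q1, q2)). split; apply ball_R; assumption.
Qed.

Lemma between_abs p q c : Rmin p q <= c <= Rmax p q -> Rabs (c - p) <= Rabs (q - p).
Proof. unfold Rmin, Rmax; destruct (Rle_dec p q); intros; split_Rabs; lra. Qed.

Lemma mvt1 (h dh : R -> R) (x y : R) :
  (forall z, Rmin x y <= z <= Rmax x y -> is_derive h z (dh z)) ->
  exists c, Rmin x y <= c <= Rmax x y /\ h y - h x = dh c * (y - x).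
Proof.
  intros H. apply MVT_gen.
  - intros z hz. apply H. lra.
  - intros z hz. apply continuity_pt_filterlim. apply (ex_derive_continuous (K:=R_AbsRing) (V:=R_NormedModule)).
    eexists; apply H; exact hz.
Qed.


Definition pex3 (f : R -> R -> R -> R) p1 p2 p3 d0 : Prop :=
  forall q1 q2 q3, Rabs (q1 - p1) < d0 -> Rabs (q2 - p2) < d0 -> Rabs (q3 - p3) < d0 ->
   ex_derive (fun z => f z q2 q3) q1 /\ ex_derive (fun z => f q1 z q3) q2 /\
   ex_derive (fun z => f q1 q2 z) q3.

Lemma bound_piece (A L e x : R) : Rabs (A - L) < e -> Rabs ((A - L) * x) <= e * Rabs x.
Proof. intros H. rewrite Rabs_mult. apply Rmult_le_compat_r; [apply Rabs_pos|lra]. Qed.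

Lemma diff3 f p1 p2 p3 d0 : 0 < d0 -> pex3 f p1 p2 p3 d0 ->
  ec3 (pd1 f) p1 p2 p3 -> ec3 (pd2 f) p1 p2 p3 -> ec3 (pd3 f) p1 p2 p3 ->
  forall eps, 0 < eps -> exists d, 0 < d /\ forall q1 q2 q3,
   Rabs (q1 - p1) < d -> Rabs (q2 - p2) < d -> Rabs (q3 - p3) < d ->
   Rabs (f q1 q2 q3 - f p1 p2 p3 - (pd1 f p1 p2 p3 * (q1 - p1) + pd2 f p1 p2 p3 * (q2 - p2)
          + pd3 f p1 p2 p3 * (q3 - p3)))
     <= eps * (Rabs (q1 - p1) + Rabs (q2 - p2) + Rabs (q3 - p3)).
Proof.
  intros Hd0 Hex E1 E2 E3 eps Heps.
  destruct (E1 eps Heps) as [d1 [Hd1 F1]].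
  destruct (E2 eps Heps) as [d2 [Hd2 F2]].
  destruct (E3 eps Heps) as [d3 [Hd3 F3]].
  exists (Rmin d0 (Rmin d1 (Rmin d2 d3))). split.
  { repeat apply Rmin_pos; assumption. }
  intros q1 q2 q3 h1 h2 h3.
  assert (m0 := Rmin_l d0 (Rmin d1 (Rmin d2 d3))).
  assert (m1 := Rmin_l d1 (Rmin d2 d3)).
  assert (m2 := Rmin_l d2 d3).
  assert (m3 := Rmin_r d2 d3).
  assert (m1' := Rmin_r d0 (Rmin d1 (Rmin d2 d3))).
  assert (m2' := Rmin_r d1 (Rmin d2 d3)).
  destruct (mvt1 (fun z => f z q2 q3) (fun z => pd1 f z q2 q3) p1 q1) as [c1 [hc1 ec1]].
  { intros z hz. apply Derive_correct. apply (Hex z q2 q3); try lra.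
    apply between_abs in hz. lra. }
  destruct (mvt1 (fun z => f p1 z q3) (fun z => pd2 f p1 z q3) p2 q2) as [c2 [hc2 ec2]].
  { intros z hz. apply Derive_correct. apply (Hex p1 z q3); try lra.
    rewrite Rminus_eq_0, Rabs_R0; lra. apply between_abs in hz. lra. }
  destruct (mvt1 (fun z => f p1 p2 z) (fun z => pd3 f p1 p2 z) p3 q3) as [c3 [hc3 ec3']].
  { intros z hz. apply Derive_correct. apply (Hex p1 p2 z); try (rewrite Rminus_eq_0, Rabs_R0; lra).
    apply between_abs in hz. lra. }
  simpl in ec1, ec2, ec3'.
  apply between_abs in hc1. apply between_abs in hc2. apply between_abs in hc3.
  assert (B1 : Rabs (pd1 f c1 q2 q3 - pd1 f p1 p2 p3) < eps) by (apply F1; lra).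
  assert (B2 : Rabs (pd2 f p1 c2 q3 - pd2 f p1 p2 p3) < eps)
    by (apply F2; try lra; rewrite Rminus_eq_0, Rabs_R0; lra).
  assert (B3 : Rabs (pd3 f p1 p2 c3 - pd3 f p1 p2 p3) < eps)
    by (apply F3; try lra; rewrite Rminus_eq_0, Rabs_R0; lra).
  replace (f q1 q2 q3 - f p1 p2 p3 - (pd1 f p1 p2 p3 * (q1 - p1) + pd2 f p1 p2 p3 * (q2 - p2)
          + pd3 f p1 p2 p3 * (q3 - p3))) with
    ((pd1 f c1 q2 q3 - pd1 f p1 p2 p3) * (q1 - p1) + (pd2 f p1 c2 q3 - pd2 f p1 p2 p3) * (q2 - p2)
     + (pd3 f p1 p2 c3 - pd3 f p1 p2 p3) * (q3 - p3)).
  2:{ transitivity ((f q1 q2 q3 - f p1 q2 q3) + (f p1 q2 q3 - f p1 p2 q3) + (f p1 p2 q3 - f p1 p2 p3)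
         - (pd1 f p1 p2 p3 * (q1 - p1) + pd2 f p1 p2 p3 * (q2 - p2) + pd3 f p1 p2 p3 * (q3 - p3))).
      rewrite ec1, ec2, ec3'. ring. ring. }
  apply bound_piece with (x := q1 - p1) in B1.
  apply bound_piece with (x := q2 - p2) in B2.
  apply bound_piece with (x := q3 - p3) in B3.
  eapply Rle_trans. apply Rabs_triang.
  eapply Rle_trans. apply Rplus_le_compat_r. apply Rabs_triang.
  lra.
Qed.


Lemma chain3 f u v w t du dv dw d0 : 0 < d0 -> pex3 f (u t) (v t) (w t) d0 ->
  ec3 (pd1 f) (u t) (v t) (w t) -> ec3 (pd2 f) (u t) (v t) (w t) -> ec3 (pd3 f) (u t) (v t) (w t) ->
  is_derive u t du -> is_derive v t dv -> is_derive w t dw ->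
  is_derive (fun z => f (u z) (v z) (w z)) t
    (pd1 f (u t) (v t) (w t) * du + pd2 f (u t) (v t) (w t) * dv + pd3 f (u t) (v t) (w t) * dw).
Proof.
  intros Hd0 Hex E1 E2 E3 Du Dv Dw.
  apply is_derive_Reals in Du. apply is_derive_Reals in Dv. apply is_derive_Reals in Dw.
  apply is_derive_Reals. intros eps Heps.
  set (L1 := pd1 f (u t) (v t) (w t)). set (L2 := pd2 f (u t) (v t) (w t)).
  set (L3 := pd3 f (u t) (v t) (w t)).
  set (K := Rabs du + Rabs dv + Rabs dw + 3).
  set (M := Rabs L1 + Rabs L2 + Rabs L3 + 1).
  assert (HK : 3 <= K) by (unfold K; generalize (Rabs_pos du) (Rabs_pos dv) (Rabs_pos dw); lra).
  assert (HM : 1 <= M) by (unfold M; generalize (Rabs_pos L1) (Rabs_pos L2) (Rabs_pos L3); lra).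
  set (e1 := eps / (2 * K)).
  assert (He1 : 0 < e1) by (unfold e1; apply Rdiv_lt_0_compat; lra).
  set (e2 := Rmin 1 (eps / (2 * M))).
  assert (He2 : 0 < e2) by (unfold e2; apply Rmin_pos; [lra|apply Rdiv_lt_0_compat; lra]).
  assert (He2a : e2 <= 1) by apply Rmin_l.
  assert (He2b : e2 * M <= eps / 2).
  { assert (e2 <= eps / (2 * M)) by apply Rmin_r.
    apply Rmult_le_compat_r with (r := M) in H; [|lra].
    replace (eps / (2 * M) * M) with (eps / 2) in H by (field; lra). exact H. }
  destruct (diff3 f (u t) (v t) (w t) d0 Hd0 Hex E1 E2 E3 e1 He1) as [dd [Hdd Fd]].
  destruct (Du e2 He2) as [du' Hdu]. destruct (Dv e2 He2) as [dv' Hdv].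
  destruct (Dw e2 He2) as [dw' Hdw].
  assert (HddK : 0 < dd / K) by (apply Rdiv_lt_0_compat; lra).
  exists (mkposreal _ (Rmin_pos _ _ (Rmin_pos _ _ (cond_pos du') (cond_pos dv'))
                              (Rmin_pos _ _ (cond_pos dw') HddK))).
  intros h hn hh. simpl in hh.
  assert (h1 : Rabs h < du') by (eapply Rlt_le_trans; [exact hh|]; eapply Rle_trans; apply Rmin_l).
  assert (h2 : Rabs h < dv') by (eapply Rlt_le_trans; [exact hh|]; eapply Rle_trans; [apply Rmin_l|apply Rmin_r]).
  assert (h3 : Rabs h < dw') by (eapply Rlt_le_trans; [exact hh|]; eapply Rle_trans; [apply Rmin_r|apply Rmin_l]).
  assert (h4 : Rabs h < dd / K) by (eapply Rlt_le_trans; [exact hh|]; eapply Rle_trans; apply Rmin_r).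
  specialize (Hdu h hn h1). specialize (Hdv h hn h2). specialize (Hdw h hn h3).
  set (ru := (u (t + h) - u t) / h - du) in *.
  set (rv := (v (t + h) - v t) / h - dv) in *.
  set (rw := (w (t + h) - w t) / h - dw) in *.
  assert (Hah : 0 < Rabs h) by (apply Rabs_pos_lt; exact hn).
  assert (Eu : u (t + h) - u t = (du + ru) * h) by (unfold ru; field; exact hn).
  assert (Ev : v (t + h) - v t = (dv + rv) * h) by (unfold rv; field; exact hn).
  assert (Ew : w (t + h) - w t = (dw + rw) * h) by (unfold rw; field; exact hn).
  assert (Bu : Rabs (du + ru) <= Rabs du + 1) by (eapply Rle_trans; [apply Rabs_triang|lra]).
  assert (Bv : Rabs (dv + rv) <= Rabs dv + 1) by (eapply Rle_trans; [apply Rabs_triang|lra]).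
  assert (Bw : Rabs (dw + rw) <= Rabs dw + 1) by (eapply Rle_trans; [apply Rabs_triang|lra]).
  assert (Ks : (Rabs du + 1) * Rabs h < dd /\ (Rabs dv + 1) * Rabs h < dd /\ (Rabs dw + 1) * Rabs h < dd).
  { assert (Rabs h * K < dd).
    { apply Rmult_lt_compat_r with (r := K) in h4; [|lra].
      replace (dd / K * K) with dd in h4 by (field; lra). exact h4. }
    unfold K in H. generalize (Rabs_pos du) (Rabs_pos dv) (Rabs_pos dw); nra. }
  destruct Ks as [Ku [Kv Kw]].
  assert (Au : Rabs (u (t + h) - u t) <= (Rabs du + 1) * Rabs h)
    by (rewrite Eu, Rabs_mult; apply Rmult_le_compat_r; [apply Rabs_pos|exact Bu]).
  assert (Av : Rabs (v (t + h) - v t) <= (Rabs dv + 1) * Rabs h)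
    by (rewrite Ev, Rabs_mult; apply Rmult_le_compat_r; [apply Rabs_pos|exact Bv]).
  assert (Aw : Rabs (w (t + h) - w t) <= (Rabs dw + 1) * Rabs h)
    by (rewrite Ew, Rabs_mult; apply Rmult_le_compat_r; [apply Rabs_pos|exact Bw]).
  specialize (Fd (u (t + h)) (v (t + h)) (w (t + h)) ltac:(lra) ltac:(lra) ltac:(lra)).
  fold L1 L2 L3 in Fd.
  set (R0 := f (u (t + h)) (v (t + h)) (w (t + h)) - f (u t) (v t) (w t) -
         (L1 * (u (t + h) - u t) + L2 * (v (t + h) - v t) + L3 * (w (t + h) - w t))) in *.
  assert (EQ : (f (u (t + h)) (v (t + h)) (w (t + h)) - f (u t) (v t) (w t)) / h -
     (L1 * du + L2 * dv + L3 * dw) = R0 / h + (L1 * ru + L2 * rv + L3 * rw)).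
  { unfold R0. rewrite Eu, Ev, Ew. field. exact hn. }
  rewrite EQ.
  assert (BR : Rabs (R0 / h) <= eps / 2).
  { unfold Rdiv. rewrite Rabs_mult, Rabs_inv.
    apply Rmult_le_reg_r with (Rabs h); [lra|].
    rewrite Rmult_assoc, Rinv_l by lra. rewrite Rmult_1_r.
    eapply Rle_trans; [exact Fd|].
    assert (e1 * K = eps / 2) by (unfold e1; field; lra).
    unfold K in H. nra. }
  assert (BL : Rabs (L1 * ru + L2 * rv + L3 * rw) < eps / 2).
  { eapply Rle_lt_trans. apply Rabs_triang.
    eapply Rle_lt_trans. apply Rplus_le_compat_r. apply Rabs_triang.
    rewrite !Rabs_mult.
    assert (Rabs L1 * Rabs ru <= Rabs L1 * e2) by (apply Rmult_le_compat_l; [apply Rabs_pos|lra]).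
    assert (Rabs L2 * Rabs rv <= Rabs L2 * e2) by (apply Rmult_le_compat_l; [apply Rabs_pos|lra]).
    assert (Rabs L3 * Rabs rw <= Rabs L3 * e2) by (apply Rmult_le_compat_l; [apply Rabs_pos|lra]).
    unfold M in He2b. lra. }
  eapply Rle_lt_trans. apply Rabs_triang. lra.
Qed.


Lemma dmul (f g : R -> R) (x df dg : R) : is_derive f x df -> is_derive g x dg ->
  is_derive (fun z => f z * g z) x (df * g x + f x * dg).
Proof. rewrite !is_derive_Reals. intros; apply (derivable_pt_lim_mult f g); assumption. Qed.
Lemma dadd (f g : R -> R) (x df dg : R) : is_derive f x df -> is_derive g x dg ->
  is_derive (fun z => f z + g z) x (df + dg).
Proof. rewrite !is_derive_Reals. intros; apply (derivable_pt_lim_plus f g); assumption. Qed.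
Lemma dopp (f : R -> R) (x df : R) : is_derive f x df -> is_derive (fun z => - f z) x (- df).
Proof. rewrite !is_derive_Reals. intros; apply (derivable_pt_lim_opp f); assumption. Qed.
Lemma deq (f : R -> R) (x l l' : R) : is_derive f x l -> l = l' -> is_derive f x l'.
Proof. intros H ->; exact H. Qed.


Lemma C13_chain (D : R -> R -> Prop) (a b : Rbar) (HDopen : open (fun p : R * R => D (fst p) (snd p))) f (Hf : C1_3 (fun y1 y2 t : R => D y1 y2 /\ inI a b t) f) u v w t du dv dw :
  D (u t) (v t) -> inI a b (w t) ->
  is_derive u t du -> is_derive v t dv -> is_derive w t dw ->
  is_derive (fun z => f (u z) (v z) (w z)) t
    (pd1 f (u t) (v t) (w t) * du + pd2 f (u t) (v t) (w t) * dv + pd3 f (u t) (v t) (w t) * dw).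
Proof.
  intros HD HI Du Dv Dw.
  destruct (D_loc D _ _ HDopen HD) as [d1 [Hd1 F1]].
  destruct (inI_loc a b _ HI) as [d2 [Hd2 F2]].
  destruct (Hf _ _ _ (conj HD HI)) as [_ [_ [_ [_ [C1 [C2 C3]]]]]].
  apply (chain3 f u v w t du dv dw (Rmin d1 d2)); try (apply cont3_ec; assumption); auto.
  - apply Rmin_pos; assumption.
  - intros q1 q2 q3 h1 h2 h3.
    assert (m1 := Rmin_l d1 d2). assert (m2 := Rmin_r d1 d2).
    destruct (Hf q1 q2 q3) as [e1 [e2 [e3 _]]].
    { split; [apply F1|apply F2]; lra. }
    auto.
Qed.

Lemma C12_chain (a b : Rbar) x (Hx : C1_2 (fun s t : R => inI a b t) x) u w t du dw :
  inI a b (w t) -> is_derive u t du -> is_derive w t dw ->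
  is_derive (fun z => x (u z) (w z)) t (ps x (u t) (w t) * du + pt x (u t) (w t) * dw).
Proof.
  intros HI Du Dw.
  destruct (inI_loc a b _ HI) as [d2 [Hd2 F2]].
  set (f := fun (y1 y2 y3 : R) => x y1 y3).
  assert (P2 : forall y1 y2 y3, pd2 f y1 y2 y3 = 0).
  { intros; unfold pd2, f; apply Derive_const. }
  destruct (Hx (u t) (w t) HI) as [_ [_ [_ [C1 C3]]]].
  eapply deq.
  apply (chain3 f u (fun _ => 0) w t du 0 dw d2); auto.
  - intros q1 q2 q3 h1 h2 h3. destruct (Hx q1 q3) as [e1 [e2 _]].
    { apply F2; lra. }
    unfold f; repeat split; auto. apply ex_derive_const.
  - intros eps Heps. destruct (cont2_ec _ _ _ C1 eps Heps) as [d [Hd F]].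
    exists d; split; auto. intros. apply F; auto.
  - intros eps Heps. exists 1; split; [lra|]. intros. rewrite !P2, Rminus_eq_0, Rabs_R0; lra.
  - intros eps Heps. destruct (cont2_ec _ _ _ C3 eps Heps) as [d [Hd F]].
    exists d; split; auto. intros. apply F; auto.
  - apply (is_derive_const (K:=R_AbsRing) (V:=R_NormedModule)).
  - rewrite P2. unfold pd1, pd3, f, ps, pt. ring.
Qed.

Lemma cont_along g (x1 x2 : R -> R -> R) s t :
  cont3 g (x1 s t) (x2 s t) t -> continuous (fun z => x1 z t) s -> continuous (fun z => x2 z t) s ->
  continuous (fun z => g (x1 z t) (x2 z t) t) s.
Proof.
  intros Hg H1 H2.
  apply (continuous_comp (fun z => ((x1 z t, x2 z t), t))
     (fun p : (R * R) * R => g (fst (fst p)) (snd (fst p)) (snd p))); [|exact Hg].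
  apply (continuous_comp_2 (fun z => (x1 z t, x2 z t)) (fun _ => t) (fun p q => (p, q))).
  - apply (continuous_comp_2 (fun z => x1 z t) (fun z => x2 z t) (fun p q => (p, q))); auto.
    apply continuous_ext with (f := fun p => p). { intros [p q]; reflexivity. } apply continuous_id.
  - apply continuous_const.
  - apply continuous_ext with (f := fun p => p). { intros [p q]; reflexivity. } apply continuous_id.
Qed.



Lemma lin_ode (N dv psi : R -> R) :
  (forall s, is_derive N s (dv s * N s + psi s)) ->
  (forall s, continuous dv s) -> (forall s, continuous psi s) ->
  forall s, N s = exp (RInt dv 0 s) * N 0 + RInt (fun th => exp (RInt dv th s) * psi th) 0 s.
Proof.
  intros HN Hdv Hpsi s.
  set (I := fun z => RInt dv 0 z).
  assert (Hex : forall p q, ex_RInt dv p q).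
  { intros; apply (ex_RInt_continuous (V:=R_CompleteNormedModule)); intros; apply Hdv. }
  assert (HI : forall z, is_derive I z (dv z)).
  { intros z. apply (is_derive_RInt (V:=R_NormedModule)) with (a := 0).
    - apply filter_forall. intros b0. apply (RInt_correct (V:=R_CompleteNormedModule)). apply Hex.
    - apply Hdv. }
  assert (HIc : forall z, continuous I z).
  { intros z. apply (ex_derive_continuous (K:=R_AbsRing) (V:=R_NormedModule)). eexists; apply HI. }
  set (H := fun z => N z * exp (- I z)).
  set (g := fun z => psi z * exp (- I z)).
  assert (HH : forall z, is_derive H z (g z)).
  { intros z. eapply deq. apply dmul. apply HN.
    apply (is_derive_comp (K:=R_AbsRing) (V:=R_NormedModule) exp (fun z => - I z)).
    apply is_derive_exp. apply dopp. apply HI.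
    unfold g; simpl. unfold scal; simpl; unfold mult; simpl. ring. }
  assert (Hg : forall z, continuous g z).
  { intros z. unfold g. apply (continuous_mult (K:=R_AbsRing)). apply Hpsi.
    apply continuous_exp_comp. apply (continuous_opp (K:=R_AbsRing) (V:=R_NormedModule)). apply HIc. }
  assert (R1 : is_RInt g 0 s (H s - H 0)).
  { apply (is_RInt_derive (V:=R_CompleteNormedModule) H g).
    intros; apply HH. intros; apply Hg. }
  assert (I0 : I 0 = 0).
  { unfold I. rewrite (RInt_point (V:=R_CompleteNormedModule)). reflexivity. }
  assert (Chas : forall th, RInt dv th s = I s - I th).
  { intros th. unfold I. rewrite <- (RInt_Chasles (V:=R_CompleteNormedModule) dv 0 th s) by apply Hex.
    unfold plus; simpl. unfold Rminus. rewrite (Rplus_comm (RInt dv 0 th)), Rplus_assoc, Rplus_opp_r, Rplus_0_r. reflexivity. }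
  assert (R2 : is_RInt (fun th => exp (RInt dv th s) * psi th) 0 s (exp (I s) * (H s - H 0))).
  { apply (is_RInt_ext (V:=R_NormedModule) (fun th => scal (exp (I s)) (g th))).
    - intros th _. rewrite Chas. unfold g, scal; simpl; unfold mult; simpl.
      unfold Rminus. rewrite exp_plus. ring.
    - apply (is_RInt_scal (V:=R_NormedModule)). exact R1. }
  rewrite (is_RInt_unique (V:=R_CompleteNormedModule) _ _ _ _ R2).
  fold (I s). unfold H. rewrite I0, Ropp_0, exp_0.
  replace (exp (I s) * (N s * exp (- I s) - N 0 * 1)) with
    (N s * (exp (I s) * exp (- I s)) - exp (I s) * N 0) by ring.
  rewrite <- exp_plus, Rplus_opp_r, exp_0. ring.
Qed.


Lemma cadd (f g : R -> R) x : continuous f x -> continuous g x -> continuous (fun z => f z + g z) x.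
Proof. intros; apply (continuous_plus (K:=R_AbsRing) (V:=R_NormedModule)); assumption. Qed.
Lemma cmul (f g : R -> R) x : continuous f x -> continuous g x -> continuous (fun z => f z * g z) x.
Proof. intros; apply (continuous_mult (K:=R_AbsRing)); assumption. Qed.
Lemma copp (f : R -> R) x : continuous f x -> continuous (fun z => - f z) x.
Proof. intros; apply (continuous_opp (K:=R_AbsRing) (V:=R_NormedModule)); assumption. Qed.

Lemma dunique (f : R -> R) x l1 l2 : is_derive f x l1 -> is_derive f x l2 -> l1 = l2.
Proof. intros H1 H2. apply is_derive_unique in H1. apply is_derive_unique in H2. congruence. Qed.

Lemma loc_inI a b t (P : R -> Prop) : inI a b t -> (forall z, inI a b z -> P z) -> locally t P.
Proof.
  intros Ht HP. destruct (inI_loc a b t Ht) as [d [Hd F]].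
  exists (mkposreal d Hd). intros y hy. apply HP, F. apply ball_R in hy. exact hy.
Qed.

Lemma schwarz_x a b (x : R -> R -> R)
  (Hx : C1_2 (fun s t : R => inI a b t) x)
  (Hxs : C1_2 (fun s t : R => inI a b t) (ps x))
  (Hxt : C1_2 (fun s t : R => inI a b t) (pt x)) s t :
  inI a b t -> ps (pt x) s t = pt (ps x) s t.
Proof.
  intros Ht. unfold ps, pt.
  apply Schwarz.
  - destruct (inI_loc a b t Ht) as [d [Hd F]]. exists (mkposreal d Hd). simpl.
    intros u v hu hv. assert (Hv : inI a b v) by (apply F; exact hv).
    destruct (Hx u v Hv) as [e1 [e2 _]]. destruct (Hxt u v Hv) as [e3 _].
    destruct (Hxs u v Hv) as [_ [e4 _]]. repeat split; assumption.
  - destruct (Hxt s t Ht) as [_ [_ [_ [C _]]]]. apply continuity_2d_pt_filterlim. exact C.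
  - destruct (Hxs s t Ht) as [_ [_ [_ [_ C]]]]. apply continuity_2d_pt_filterlim. exact C.
Qed.

Lemma dconst (c x : R) : is_derive (fun _ => c) x 0.
Proof. apply (is_derive_const (K:=R_AbsRing) (V:=R_NormedModule)). Qed.


Lemma pt_deriv (D : R -> R -> Prop) (a b : Rbar)
  (HDopen : open (fun p : R * R => D (fst p) (snd p)))
  (x1 x2 x : R -> R -> R) (c : R -> R -> R -> R)
  (Hc : C1_3 (fun y1 y2 t : R => D y1 y2 /\ inI a b t) c)
  (HxD : forall s t : R, inI a b t -> D (x1 s t) (x2 s t))
  (Hx1 : C1_2 (fun s t : R => inI a b t) x1)
  (Hx2 : C1_2 (fun s t : R => inI a b t) x2)
  (Hx : C1_2 (fun s t : R => inI a b t) x)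
  (Hxs : C1_2 (fun s t : R => inI a b t) (ps x))
  (Hxt : C1_2 (fun s t : R => inI a b t) (pt x))
  (Hode : forall s t : R, inI a b t -> ps x s t = c (x1 s t) (x2 s t) t) s t :
  inI a b t ->
  is_derive (fun z => pt x z t) s
    (pd1 c (x1 s t) (x2 s t) t * pt x1 s t + pd2 c (x1 s t) (x2 s t) t * pt x2 s t
     + pd3 c (x1 s t) (x2 s t) t * 1).
Proof.
  intros Ht.
  assert (E : ps (pt x) s t = pt (ps x) s t) by (apply (schwarz_x a b); assumption).
  destruct (Hxt s t Ht) as [ex _].
  generalize (Derive_correct _ _ ex). intros H.
  change (is_derive (fun z => pt x z t) s (ps (pt x) s t)) in H.
  rewrite E in H. eapply deq. exact H.
  unfold pt at 1.
  rewrite (Derive_ext_loc (fun z => ps x s z) (fun z => c (x1 s z) (x2 s z) z)).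
  2:{ apply (loc_inI a b t). exact Ht. intros z hz. apply Hode. exact hz. }
  apply is_derive_unique.
  apply (C13_chain D a b HDopen c Hc (fun z => x1 s z) (fun z => x2 s z) (fun z => z)); auto.
  - apply Derive_correct. apply (Hx1 s t Ht).
  - apply Derive_correct. apply (Hx2 s t Ht).
  - apply (is_derive_id (K:=R_AbsRing)).
Qed.

Lemma per_deriv (a b : Rbar) (x : R -> R -> R) (sigma : R -> R)
  (Hx : C1_2 (fun s t : R => inI a b t) x)
  (Hper : forall s t : R, inI a b t -> x (s + sigma t) t = x s t) t :
  inI a b t -> ex_derive sigma t ->
  pt x (sigma t) t = pt x 0 t - ps x (sigma t) t * Derive sigma t.
Proof.
  intros Ht Hs.
  assert (A : is_derive (fun z => x (sigma z) z) t
      (ps x (sigma t) t * Derive sigma t + pt x (sigma t) t * 1)).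
  { apply (C12_chain a b x Hx sigma (fun z => z)); auto.
    apply Derive_correct; exact Hs. apply (is_derive_id (K:=R_AbsRing)). }
  assert (B : is_derive (fun z => x (sigma z) z) t (pt x 0 t)).
  { apply (is_derive_ext_loc (fun z => x 0 z)).
    - apply (loc_inI a b t). exact Ht. intros z hz. rewrite <- (Hper 0 z hz), Rplus_0_l. reflexivity.
    - apply Derive_correct. apply (Hx 0 t Ht). }
  generalize (dunique _ _ _ _ A B). intros E. lra.
Qed.

Theorem mainTheorem1
  (D : R -> R -> Prop) (a b : Rbar)
  (c1 c2 : R -> R -> R -> R)
  (x1 x2 : R -> R -> R)
  (sigma : R -> R)
  (HDopen : open (fun p : R * R => D (fst p) (snd p)))
  (Hab : Rbar_lt a b)
  (Hc1 : C1_3 (fun y1 y2 t : R => D y1 y2 /\ inI a b t) c1)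
  (Hc2 : C1_3 (fun y1 y2 t : R => D y1 y2 /\ inI a b t) c2)
  (Hunit : forall y1 y2 t : R, D y1 y2 -> inI a b t ->
      c1 y1 y2 t ^ 2 + c2 y1 y2 t ^ 2 = 1)
  (HxD : forall s t : R, inI a b t -> D (x1 s t) (x2 s t))
  (Hx1 : C1_2 (fun s t : R => inI a b t) x1)
  (Hx2 : C1_2 (fun s t : R => inI a b t) x2)
  (Hx1s : C1_2 (fun s t : R => inI a b t) (ps x1))
  (Hx1t : C1_2 (fun s t : R => inI a b t) (pt x1))
  (Hx2s : C1_2 (fun s t : R => inI a b t) (ps x2))
  (Hx2t : C1_2 (fun s t : R => inI a b t) (pt x2))
  (Hode1 : forall s t : R, inI a b t ->
      ps x1 s t = c1 (x1 s t) (x2 s t) t)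
  (Hode2 : forall s t : R, inI a b t ->
      ps x2 s t = c2 (x1 s t) (x2 s t) t)
  (Hsig_pos : forall t : R, inI a b t -> 0 < sigma t)
  (Hsig_C1 : forall t : R, inI a b t ->
      ex_derive sigma t /\ continuous sigma t /\ continuous (Derive sigma) t)
  (Hper1 : forall s t : R, inI a b t ->
      x1 (s + sigma t) t = x1 s t)
  (Hper2 : forall s t : R, inI a b t ->
      x2 (s + sigma t) t = x2 s t)
  (Hrho : forall t : R, inI a b t ->
      exp (RInt (fun th => divg c1 c2 (x1 th t) (x2 th t) t) 0 (sigma t)) <> 1) :
  let dv := fun s t => divg c1 c2 (x1 s t) (x2 s t) t in
  let rho2 := fun t => exp (RInt (fun th => dv th t) 0 (sigma t)) in
  let psi := fun s t =>
      dot2 (- c2 (x1 s t) (x2 s t) t) (c1 (x1 s t) (x2 s t) t)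
           (pd3 c1 (x1 s t) (x2 s t) t) (pd3 c2 (x1 s t) (x2 s t) t) in
  let Piperp := fun s t =>
      RInt (fun th => exp (RInt (fun tau => dv tau t) th s) * psi th t) 0 s in
  let N := fun s t =>
      dot2 (pt x1 s t) (pt x2 s t)
           (- c2 (x1 s t) (x2 s t) t) (c1 (x1 s t) (x2 s t) t) in
  (forall s t : R, inI a b t ->
     N s t = exp (RInt (fun th => dv th t) 0 s) * N 0 t + Piperp s t /\
     N 0 t = Piperp (sigma t) t / (1 - rho2 t))
  /\
  (forall (mu : R) (S11 S12 S21 S22 : R -> R -> R -> R),
     C1_3 (fun y1 y2 t : R => D y1 y2 /\ inI a b t) S11 ->
     C1_3 (fun y1 y2 t : R => D y1 y2 /\ inI a b t) S12 ->
     C1_3 (fun y1 y2 t : R => D y1 y2 /\ inI a b t) S21 ->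
     C1_3 (fun y1 y2 t : R => D y1 y2 /\ inI a b t) S22 ->
     (forall y1 y2 t : R, D y1 y2 -> inI a b t ->
        S12 y1 y2 t = S21 y1 y2 t) ->
     (forall y1 y2 t : R, D y1 y2 -> inI a b t ->
        let u1 := c1 y1 y2 t in let u2 := c2 y1 y2 t in
        dot2 u1 u2 ((S11 y1 y2 t - mu) * u1 + S12 y1 y2 t * u2)
                   (S21 y1 y2 t * u1 + (S22 y1 y2 t - mu) * u2) = 0) ->
     forall s t : R, inI a b t ->
       let y1 := x1 s t in let y2 := x2 s t in
       let u1 := c1 y1 y2 t in let u2 := c2 y1 y2 t in
       let q := dot2 u1 u2 (S11 y1 y2 t * (- u2) + S12 y1 y2 t * u1)
                           (S21 y1 y2 t * (- u2) + S22 y1 y2 t * u1) in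
       q <> 0 ->
       psi s t =
         - dot2 u1 u2 (pd3 S11 y1 y2 t * u1 + pd3 S12 y1 y2 t * u2)
                      (pd3 S21 y1 y2 t * u1 + pd3 S22 y1 y2 t * u2)
           / (2 * q)).
Proof.
  intros dv rho2 psi Piperp N. split.
  - intros s0 t Ht.
    assert (HX1 : forall s, is_derive (fun z => x1 z t) s (c1 (x1 s t) (x2 s t) t)).
    { intros s. rewrite <- (Hode1 s t Ht). apply Derive_correct. apply (Hx1 s t Ht). }
    assert (HX2 : forall s, is_derive (fun z => x2 z t) s (c2 (x1 s t) (x2 s t) t)).
    { intros s. rewrite <- (Hode2 s t Ht). apply Derive_correct. apply (Hx2 s t Ht). }
    assert (HC1 : forall s, is_derive (fun z => c1 (x1 z t) (x2 z t) t) s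
        (pd1 c1 (x1 s t) (x2 s t) t * c1 (x1 s t) (x2 s t) t +
         pd2 c1 (x1 s t) (x2 s t) t * c2 (x1 s t) (x2 s t) t + pd3 c1 (x1 s t) (x2 s t) t * 0)).
    { intros s. apply (C13_chain D a b HDopen c1 Hc1 (fun z => x1 z t) (fun z => x2 z t) (fun _ => t));
        auto. apply (is_derive_const (K:=R_AbsRing) (V:=R_NormedModule)). }
    assert (HC2 : forall s, is_derive (fun z => c2 (x1 z t) (x2 z t) t) s
        (pd1 c2 (x1 s t) (x2 s t) t * c1 (x1 s t) (x2 s t) t +
         pd2 c2 (x1 s t) (x2 s t) t * c2 (x1 s t) (x2 s t) t + pd3 c2 (x1 s t) (x2 s t) t * 0)).
    { intros s. apply (C13_chain D a b HDopen c2 Hc2 (fun z => x1 z t) (fun z => x2 z t) (fun _ => t));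
        auto. apply (is_derive_const (K:=R_AbsRing) (V:=R_NormedModule)). }
    assert (HT1 := fun s => pt_deriv D a b HDopen x1 x2 x1 c1 Hc1 HxD Hx1 Hx2 Hx1 Hx1s Hx1t Hode1 s t Ht).
    assert (HT2 := fun s => pt_deriv D a b HDopen x1 x2 x2 c2 Hc2 HxD Hx1 Hx2 Hx2 Hx2s Hx2t Hode2 s t Ht).
    assert (HN : forall s, is_derive (fun z => N z t) s (dv s t * N s t + psi s t)).
    { intros s. unfold N, dot2. eapply deq.
      apply dadd; apply dmul; [apply HT1 | apply dopp; apply HC2 | apply HT2 | apply HC1].
      unfold dv, psi, N, divg, dot2. ring. }
    assert (Hcx1 : forall s, continuous (fun z => x1 z t) s).
    { intros s. apply (ex_derive_continuous (K:=R_AbsRing) (V:=R_NormedModule)). eexists; apply HX1. }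
    assert (Hcx2 : forall s, continuous (fun z => x2 z t) s).
    { intros s. apply (ex_derive_continuous (K:=R_AbsRing) (V:=R_NormedModule)). eexists; apply HX2. }
    assert (Hcdv : forall s, continuous (fun z => dv z t) s).
    { intros s. unfold dv, divg. destruct (Hc1 (x1 s t) (x2 s t) t (conj (HxD s t Ht) Ht)) as [_ [_ [_ [_ [P1 _]]]]].
      destruct (Hc2 (x1 s t) (x2 s t) t (conj (HxD s t Ht) Ht)) as [_ [_ [_ [_ [_ [P2 _]]]]]].
      apply cadd; apply cont_along; auto. }
    assert (Hcpsi : forall s, continuous (fun z => psi z t) s).
    { intros s. unfold psi, dot2.
      destruct (Hc1 (x1 s t) (x2 s t) t (conj (HxD s t Ht) Ht)) as [_ [_ [_ [K1 [_ [_ P1]]]]]].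
      destruct (Hc2 (x1 s t) (x2 s t) t (conj (HxD s t Ht) Ht)) as [_ [_ [_ [K2 [_ [_ P2]]]]]].
      apply cadd; apply cmul; try apply copp; apply cont_along; auto. }
    assert (Hsol := lin_ode (fun z => N z t) (fun z => dv z t) (fun z => psi z t) HN Hcdv Hcpsi).
    split. { apply Hsol. }
    destruct (Hsig_C1 t Ht) as [Hsd _].
    assert (Hs : N (sigma t) t = N 0 t).
    { unfold N, dot2.
      rewrite (per_deriv a b x1 sigma Hx1 Hper1 t Ht Hsd), (per_deriv a b x2 sigma Hx2 Hper2 t Ht Hsd).
      rewrite (Hode1 _ _ Ht), (Hode2 _ _ Ht).
      assert (E1 := Hper1 0 t Ht). assert (E2 := Hper2 0 t Ht). rewrite Rplus_0_l in E1, E2.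
      rewrite E1, E2. ring. }
    assert (HS := Hsol (sigma t)). simpl in HS. rewrite Hs in HS.
    assert (Hr := Hrho t Ht).
    change (N 0 t = Piperp (sigma t) t / (1 - rho2 t)).
    change (N 0 t = exp (RInt (fun th => dv th t) 0 (sigma t)) * N 0 t + Piperp (sigma t) t) in HS.
    change (rho2 t <> 1) in Hr.
    change (rho2 t) with (exp (RInt (fun th => dv th t) 0 (sigma t))) in Hr |- *.
    assert (1 - exp (RInt (fun th => dv th t) 0 (sigma t)) <> 0) by lra.
    field_simplify_eq; [|assumption]. lra.
  - intros mu S11 S12 S21 S22 HS11 HS12 HS21 HS22 Hsym Hq s t Ht y1 y2 u1 u2 q Hqn.
    assert (HD : D y1 y2) by (apply HxD; exact Ht).
    assert (dc : forall f, C1_3 (fun y1 y2 t : R => D y1 y2 /\ inI a b t) f ->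
       is_derive (fun z => f y1 y2 z) t (pd3 f y1 y2 t)).
    { intros f Hf. apply Derive_correct. apply (Hf y1 y2 t (conj HD Ht)). }
    assert (G1 : is_derive (fun z => c1 y1 y2 z * c1 y1 y2 z + c2 y1 y2 z * c2 y1 y2 z) t
       (pd3 c1 y1 y2 t * c1 y1 y2 t + c1 y1 y2 t * pd3 c1 y1 y2 t
        + (pd3 c2 y1 y2 t * c2 y1 y2 t + c2 y1 y2 t * pd3 c2 y1 y2 t))).
    { apply dadd; apply dmul; apply dc; assumption. }
    assert (G1' : is_derive (fun z => c1 y1 y2 z * c1 y1 y2 z + c2 y1 y2 z * c2 y1 y2 z) t 0).
    { apply (is_derive_ext_loc (fun _ => 1)).
      - apply (loc_inI a b t). exact Ht. intros z hz. cbv beta. match goal with |- ?x = ?y => change (@eq R x y) end. rewrite <- (Hunit y1 y2 z HD hz). ring.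
      - apply (is_derive_const (K:=R_AbsRing) (V:=R_NormedModule)). }
    assert (EU := dunique _ _ _ _ G1 G1').
    assert (G2 : is_derive (fun z => dot2 (c1 y1 y2 z) (c2 y1 y2 z)
          ((S11 y1 y2 z - mu) * c1 y1 y2 z + S12 y1 y2 z * c2 y1 y2 z)
          (S21 y1 y2 z * c1 y1 y2 z + (S22 y1 y2 z - mu) * c2 y1 y2 z)) t
       (pd3 c1 y1 y2 t * ((S11 y1 y2 t - mu) * c1 y1 y2 t + S12 y1 y2 t * c2 y1 y2 t)
        + c1 y1 y2 t * ((pd3 S11 y1 y2 t + - 0) * c1 y1 y2 t + (S11 y1 y2 t - mu) * pd3 c1 y1 y2 t
             + (pd3 S12 y1 y2 t * c2 y1 y2 t + S12 y1 y2 t * pd3 c2 y1 y2 t))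
        + (pd3 c2 y1 y2 t * (S21 y1 y2 t * c1 y1 y2 t + (S22 y1 y2 t - mu) * c2 y1 y2 t)
        + c2 y1 y2 t * ((pd3 S21 y1 y2 t * c1 y1 y2 t + S21 y1 y2 t * pd3 c1 y1 y2 t)
             + ((pd3 S22 y1 y2 t + - 0) * c2 y1 y2 t + (S22 y1 y2 t - mu) * pd3 c2 y1 y2 t))))).
    { assert (d1 := dc c1 Hc1). assert (d2 := dc c2 Hc2). assert (d3 := dc S11 HS11).
      assert (d4 := dc S12 HS12). assert (d5 := dc S21 HS21). assert (d6 := dc S22 HS22).
      eapply deq. unfold dot2. unfold Rminus.
      repeat match goal with
       | |- is_derive (fun z => _ + _) _ _ => apply dadd
       | |- is_derive (fun z => _ * _) _ _ => apply dmul
       | |- is_derive (fun z => - _) _ _ => apply dopp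
       | |- is_derive (fun _ => _) _ _ => apply dconst
       | |- is_derive _ _ _ => eassumption
       end.
      cbv beta. match goal with |- ?x = ?y => change (@eq R x y) end. ring. }
    assert (G2' : is_derive (fun z => dot2 (c1 y1 y2 z) (c2 y1 y2 z)
          ((S11 y1 y2 z - mu) * c1 y1 y2 z + S12 y1 y2 z * c2 y1 y2 z)
          (S21 y1 y2 z * c1 y1 y2 z + (S22 y1 y2 z - mu) * c2 y1 y2 z)) t 0).
    { apply (is_derive_ext_loc (fun _ => 0)).
      - apply (loc_inI a b t). exact Ht. intros z hz. cbv beta. match goal with |- ?x = ?y => change (@eq R x y) end. rewrite (Hq y1 y2 z HD hz). reflexivity.
      - apply (is_derive_const (K:=R_AbsRing) (V:=R_NormedModule)). }
    assert (EG := dunique _ _ _ _ G2 G2').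
    assert (Hs := Hsym y1 y2 t HD Ht).
    assert (Uu := Hunit y1 y2 t HD Ht).
    change (psi s t) with (dot2 (- u2) u1 (pd3 c1 y1 y2 t) (pd3 c2 y1 y2 t)).
    unfold q in *. fold u1 u2 in EU, EG, Uu |- *.
    unfold dot2 in *.
    generalize dependent (pd3 c1 y1 y2 t). generalize dependent (pd3 c2 y1 y2 t).
    intros A2 A1. intros.
    set (p := - u2 * A1 + u1 * A2).
    assert (HA1 : A1 = - u2 * p).
    { unfold p. replace A1 with (A1 * (u1 ^ 2 + u2 ^ 2)) at 1 by (rewrite Uu; ring).
      replace (A1 * (u1 ^ 2 + u2 ^ 2)) with (u1 * (A1 * u1 + u1 * A1 + (A2 * u2 + u2 * A2)) / 2 + - u2 * (- u2 * A1 + u1 * A2)) by field.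
      rewrite EU. field. }
    assert (HA2 : A2 = u1 * p).
    { unfold p. replace A2 with (A2 * (u1 ^ 2 + u2 ^ 2)) at 1 by (rewrite Uu; ring).
      replace (A2 * (u1 ^ 2 + u2 ^ 2)) with (u2 * (A1 * u1 + u1 * A1 + (A2 * u2 + u2 * A2)) / 2 + u1 * (- u2 * A1 + u1 * A2)) by field.
      rewrite EU. field. }
    clearbody p. subst A1 A2. rewrite Hs in EG |- *.
    assert (Hq2 : u1 * (S11 y1 y2 t * - u2 + S21 y1 y2 t * u1) + u2 * (S21 y1 y2 t * - u2 + S22 y1 y2 t * u1) <> 0)
      by (rewrite Hs in Hqn; exact Hqn).
    field_simplify_eq; [|exact Hq2]. lra.

Qed.
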